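(* Let $p,q,r$ be positive integers with $\frac1p+\frac1q+\frac1r\le1$, $M=\max\{p,q,r\}$, and $f(x,y,z)=x^p+y^q+z^r+axyz$ on $\mathbb C^3$, where $a$ is a positive real number. For $\varepsilon>0$ and $t\in\mathbb C$ let $V_a(\varepsilon,t)=f^{-1}(t)\cap D^6_\varepsilon$, where $D^6_\varepsilon$ is the closed ball of radius $\varepsilon$ centered at the origin. If $a>12M$ and $0<|t|<1$, then $V_a(1,t)$ is a Milnor fiber of $f$.
   Context: The Milnor radius $\varepsilon_f$ of $f$ is the supremum of $\varepsilon$ such that every sphere $S^5_\rho$ ($0<\rho\le\varepsilon$) centered at the origin is transverse to $f^{-1}(0)$. A Milnor fiber of $f$ is a set $f^{-1}(\delta e^{i\theta})\cap D^6_\varepsilon$ where $\varepsilon<\varepsilon_f$ and $\delta>0$ is such that $f^{-1}(s)$ meets $S^5_\varepsilon$ transversally for all $0\le|s|\le\delta$. *)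

(* Defs.v *)
From Stdlib Require Import Reals.
From Coquelicot Require Import Coquelicot.
Open Scope R_scope.

Definition C3 : Type := (C * C * C)%type.

Definition norm3 (x : C3) : R :=
  let '(x1, x2, x3) := x in sqrt (Cmod x1 ^ 2 + Cmod x2 ^ 2 + Cmod x3 ^ 2).

Definition ball6 (eps : R) (x : C3) : Prop := norm3 x <= eps.
Definition sphere5 (rho : R) (x : C3) : Prop := norm3 x = rho.

Definition add3 (u v : C3) : C3 :=
  let '(u1, u2, u3) := u in let '(v1, v2, v3) := v in
  ((u1 + v1)%C, (u2 + v2)%C, (u3 + v3)%C).

(* Real tangent space of the sphere through x: real orthogonal complement of x,
   i.e. Re <u, x> = 0 for the hermitian product. *)
Definition tangent_sphere (x u : C3) : Prop :=
  let '(x1, x2, x3) := x in let '(u1, u2, u3) := u in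
  Re (u1 * Cconj x1 + u2 * Cconj x2 + u3 * Cconj x3)%C = 0.

Definition is_gradient (f : C3 -> C) (x g : C3) : Prop :=
  let '(x1, x2, x3) := x in let '(g1, g2, g3) := g in
  is_derive (K := C_AbsRing) (fun z : C => f (z, x2, x3)) x1 g1 /\
  is_derive (K := C_AbsRing) (fun z : C => f (x1, z, x3)) x2 g2 /\
  is_derive (K := C_AbsRing) (fun z : C => f (x1, x2, z)) x3 g3.

(* Tangent space at a regular point of the level set f^{-1}(f x): kernel of df_x. *)
Definition kernel_grad (g v : C3) : Prop :=
  let '(g1, g2, g3) := g in let '(v1, v2, v3) := v in
  (g1 * v1 + g2 * v2 + g3 * v3)%C = RtoC 0.

(* The sphere S_rho meets f^{-1}(s) transversally: at every intersection point x,
   x is a regular point of f (so f^{-1}(s) is a smooth manifold near x) and the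
   tangent spaces of the sphere and of f^{-1}(s) span the tangent space R^6 = C^3. *)
Definition transverse (f : C3 -> C) (s : C) (rho : R) : Prop :=
  forall x : C3, sphere5 rho x -> f x = s ->
    exists g : C3, is_gradient f x g /\ g <> (RtoC 0, RtoC 0, RtoC 0) /\
      forall w : C3, exists u v : C3,
        add3 u v = w /\ tangent_sphere x u /\ kernel_grad g v.

Definition milnor_radius (f : C3 -> C) : Rbar :=
  Lub_Rbar (fun eps => 0 < eps /\
    forall rho, 0 < rho -> rho <= eps -> transverse f (RtoC 0) rho).

Definition milnor_fiber (f : C3 -> C) (F : C3 -> Prop) : Prop :=
  exists (eps delta theta : R),
    0 < eps /\ Rbar_lt eps (milnor_radius f) /\ 0 < delta /\
    (forall s : C, Cmod s <= delta -> transverse f s eps) /\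
    (forall x : C3, F x <->
       (f x = (RtoC delta * (cos theta, sin theta))%C /\ ball6 eps x)).

Definition fpqr (p q r : nat) (a : R) (x : C3) : C :=
  let '(x1, x2, x3) := x in
  (Cpow x1 p + Cpow x2 q + Cpow x3 r + RtoC a * x1 * x2 * x3)%C.

Definition Va (p q r : nat) (a eps : R) (t : C) (x : C3) : Prop :=
  fpqr p q r a x = t /\ ball6 eps x.

(* Main.v *)
Require Import Defs.
From Stdlib Require Import Reals Lra Lia Psatz.
From Coquelicot Require Import Coquelicot.
Open Scope R_scope.

Lemma pow_le1 u n : 0 <= u <= 1 -> u ^ n <= 1.
Proof. intros [H0 H1]. induction n; simpl. lra. assert (0 <= u^n) by (apply pow_le; lra). nra. Qed.

Lemma pow_le_decr u k m : 0 <= u <= 1 -> (k <= m)%nat -> u ^ m <= u ^ k.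
Proof.
  intros Hu Hkm. replace m with (k + (m - k))%nat by lia. rewrite pow_add.
  assert (0 <= u ^ k) by (apply pow_le; lra).
  assert (u ^ (m - k) <= 1) by (apply pow_le1; lra).
  assert (0 <= u ^ (m-k)) by (apply pow_le; lra). nra.
Qed.

Lemma powA (u1 u2 u3 L : R) (p q r : nat) :
  0 < u1 -> 0 < u2 -> 0 < u3 -> 1 < L -> (1 <= p)%nat -> (1 <= q)%nat -> (1 <= r)%nat ->
  (q*r + p*r + p*q <= p*q*r)%nat ->
  L * (u1*u2*u3) <= u1 ^ p -> L * (u1*u2*u3) <= u2 ^ q -> L * (u1*u2*u3) <= u3 ^ r ->
  1 <= u1*u2*u3.
Proof.
  intros h1 h2 h3 hL hp hq hr he e1 e2 e3.
  set (T := u1*u2*u3) in *. set (y := L * T).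
  assert (hT : 0 < T) by (unfold T; repeat apply Rmult_lt_0_compat; lra).
  assert (hy : 0 < y) by (unfold y; nra).
  set (N := (p*q*r)%nat).
  assert (a1 : y ^ (q*r) <= u1 ^ N).
  { unfold N. replace (p*q*r)%nat with (p*(q*r))%nat by lia. rewrite (pow_mult u1).
    apply pow_incr. split; [lra|assumption]. }
  assert (a2 : y ^ (p*r) <= u2 ^ N).
  { unfold N. replace (p*q*r)%nat with (q*(p*r))%nat by lia. rewrite (pow_mult u2).
    apply pow_incr. split; [lra|assumption]. }
  assert (a3 : y ^ (p*q) <= u3 ^ N).
  { unfold N. replace (p*q*r)%nat with (r*(p*q))%nat by lia. rewrite (pow_mult u3).
    apply pow_incr. split; [lra|assumption]. }
  assert (hTN : T ^ N = u1 ^ N * u2 ^ N * u3 ^ N) by (unfold T; rewrite !Rpow_mult_distr; ring).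
  assert (b : y ^ (q*r + p*r + p*q) <= T ^ N).
  { rewrite !pow_add, hTN.
    assert (0 <= y ^ (q*r)) by (apply pow_le; lra).
    assert (0 <= y ^ (p*r)) by (apply pow_le; lra).
    assert (0 <= y ^ (p*q)) by (apply pow_le; lra).
    apply Rmult_le_compat. apply Rmult_le_pos; auto. auto.
    apply Rmult_le_compat; auto. auto. }
  assert (hN : (0 < N)%nat) by (unfold N; nia).
  destruct (Rle_lt_dec y 1) as [hy1|hy1].
  - assert (c : y ^ N <= y ^ (q*r+p*r+p*q)) by (apply pow_le_decr; [lra|exact he]).
    assert (d : y ^ N = L ^ N * T ^ N) by (unfold y; apply Rpow_mult_distr).
    assert (1 < L ^ N) by (apply Rlt_pow_R1; auto).
    assert (0 < T ^ N) by (apply pow_lt; auto).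
    assert (L ^ N * T ^ N <= T ^ N) by lra.
    nra.
  - assert (1 <= y ^ (q*r+p*r+p*q)) by (apply pow_R1_Rle; lra).
    destruct (Rle_lt_dec 1 T) as [|hT1]; auto.
    assert (0 <= T ^ N < 1) by (apply pow_lt_1_compat; [lra|auto]). lra.
Qed.

Lemma ABC_small (A B Cc : R) : 0 <= A -> 0 <= B -> 0 <= Cc -> A + B + Cc <= 36/25 -> A*B*Cc < 1.
Proof.
  intros hA hB hC hs.
  assert (hab : 4 * (A * B) <= (A + B)^2) by (assert (0 <= (A-B)^2) by apply pow2_ge_0; nra).
  assert (hAB : 0 <= A + B <= 36/25 - Cc) by lra.
  assert (h4' : (A+B)^2 <= (36/25 - Cc)^2) by (apply pow_incr; lra).
  assert (h4 : 4 * (A*B*Cc) <= (36/25 - Cc)^2 * Cc) by nra.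
  assert (h5 : (36/25 - Cc)^2 * Cc < 4) by (assert (Cc <= 36/25) by lra; nra).
  lra.
Qed.

Lemma T_small (u1 u2 u3 : R) : 0 <= u1 -> 0 <= u2 -> 0 <= u3 ->
  u1^2 + u2^2 + u3^2 <= 36/25 -> u1*u2*u3 < 1.
Proof.
  intros h1 h2 h3 hs.
  assert (h := ABC_small (u1^2) (u2^2) (u3^2) ltac:(nra) ltac:(nra) ltac:(nra) hs).
  assert (0 <= u1*u2*u3) by (repeat apply Rmult_le_pos; auto).
  assert ((u1*u2*u3)^2 < 1) by (replace ((u1*u2*u3)^2) with (u1^2*u2^2*u3^2) by ring; lra).
  nra.
Qed.

Lemma sq_bound (a K ui uj uk : R) : 0 < a -> 0 < ui -> 0 < uj -> 0 < uk ->
  a * uj * uk <= K * ui -> a * ui * uk <= K * uj -> a*a*uk*uk <= K*K.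
Proof.
  intros ha hi hj hk e1 e2.
  assert (hK : 0 <= K) by (assert (0 < a*uj*uk) by (repeat apply Rmult_lt_0_compat; auto); assert (0 <= K*ui) by lra;
     destruct (Rle_lt_dec 0 K); auto; nra).
  assert (h : a*uj*uk*(a*ui*uk) <= K*ui*(K*uj)).
  { apply Rmult_le_compat; auto; left; repeat apply Rmult_lt_0_compat; auto. }
  apply Rmult_le_reg_r with (ui*uj). apply Rmult_lt_0_compat; auto.
  replace (a*a*uk*uk*(ui*uj)) with (a*uj*uk*(a*ui*uk)) by ring.
  replace (K*K*(ui*uj)) with (K*ui*(K*uj)) by ring. exact h.
Qed.

Lemma realB (u1 u2 u3 M a : R) : 0 < u1 -> 0 < u2 -> 0 < u3 ->
  u1^2 + u2^2 + u3^2 = 1 -> 2 <= M -> 12 * M < a ->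
  a * u2 * u3 <= (2*M+6) * u1 -> a * u1 * u3 <= (2*M+6) * u2 -> a * u1 * u2 <= (2*M+6) * u3 -> False.
Proof.
  intros h1 h2 h3 hs hM ha e1 e2 e3.
  assert (0 < a) by lra.
  assert (f3 := sq_bound a (2*M+6) u1 u2 u3 ltac:(lra) h1 h2 h3 e1 e2).
  assert (f1 := sq_bound a (2*M+6) u3 u2 u1 ltac:(lra) h3 h2 h1 ltac:(lra) ltac:(lra)).
  assert (f2 := sq_bound a (2*M+6) u3 u1 u2 ltac:(lra) h3 h1 h2 ltac:(lra) ltac:(lra)).
  assert (a*a*(u1^2+u2^2+u3^2) <= 3*((2*M+6)*(2*M+6))) by nra.
  rewrite hs in H0. nra.
Qed.

Lemma Cmod_RtoC_pos r : 0 <= r -> Cmod (RtoC r) = r.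
Proof. intro h; rewrite Cmod_R; apply Rabs_pos_eq; exact h. Qed.

Lemma Cmod_sub_le (u v : C) : Cmod (u - v) <= Cmod u + Cmod v.
Proof. unfold Cminus. eapply Rle_trans. apply Cmod_triangle. rewrite Cmod_opp. lra. Qed.

Lemma c1 (P a : R) (xi xj xk lam : C) (n : nat) :
  0 <= P -> 0 <= a ->
  (RtoC P * xi ^ n + RtoC a * xj * xk = lam * Cconj xi)%C ->
  a * Cmod xj * Cmod xk <= Cmod lam * Cmod xi + P * Cmod xi ^ n.
Proof.
  intros hP ha E.
  assert (e : (RtoC a * xj * xk = lam * Cconj xi - RtoC P * xi ^ n)%C) by (rewrite <- E; ring).
  assert (m := f_equal Cmod e).
  rewrite !Cmod_mult, Cmod_RtoC_pos in m by exact ha.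
  rewrite m. eapply Rle_trans. apply Cmod_sub_le.
  rewrite !Cmod_mult, Cmod_conj, Cmod_RtoC_pos, Cmod_pow by exact hP. lra.
Qed.

Lemma F3 (P a : R) (xi xj xk lam w : C) (n : nat) :
  (RtoC a * xi * xj * xk = w)%C ->
  (RtoC P * xi ^ n + RtoC a * xj * xk = lam * Cconj xi)%C ->
  (RtoC P * xi ^ (S n) + w = lam * RtoC (Cmod xi ^ 2))%C.
Proof.
  intros hw E. rewrite Cmod2_conj, <- hw. simpl Cpow.
  transitivity (xi * (RtoC P * xi ^ n + RtoC a * xj * xk))%C. ring.
  rewrite E. ring.
Qed.

Lemma algA (P Q R U1 U2 U3 : R) (X1 X2 X3 w lam : C) :
  0 < P -> 0 < Q -> 0 < R -> 0 < U1 -> 0 < U2 -> 0 < U3 ->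
  Q*R + P*R + P*Q <= P*Q*R ->
  (RtoC P * X1 + w = lam * RtoC U1)%C -> (RtoC Q * X2 + w = lam * RtoC U2)%C ->
  (RtoC R * X3 + w = lam * RtoC U3)%C -> (X1 + X2 + X3 + w = 0)%C ->
  Cmod w <= P * Cmod X1.
Proof.
  intros hP hQ hR h1 h2 h3 hc e1 e2 e3 hf.
  set (beta := U1*Q*R + U2*P*R + U3*P*Q).
  set (c := P*Q*R - (Q*R + P*R + P*Q)).
  assert (hb : 0 < beta) by (unfold beta; assert (0 < U1*Q*R) by (repeat apply Rmult_lt_0_compat; auto);
      assert (0 < U2*P*R) by (repeat apply Rmult_lt_0_compat; auto);
      assert (0 < U3*P*Q) by (repeat apply Rmult_lt_0_compat; auto); lra).
  assert (hcp : 0 <= c) by (unfold c; lra).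
  assert (hl : (lam * RtoC beta = - RtoC c * w)%C).
  { unfold beta, c. rewrite ?RtoC_plus, ?RtoC_mult, ?RtoC_minus, ?RtoC_plus, ?RtoC_mult.
    transitivity ((RtoC P * X1 + w) * (RtoC Q * RtoC R) + (RtoC Q * X2 + w) * (RtoC P * RtoC R)
       + (RtoC R * X3 + w) * (RtoC P * RtoC Q))%C.
    rewrite e1, e2, e3. ring.
    assert (HX : X1 = (- w - X2 - X3)%C) by (transitivity (X1+X2+X3+w - w - X2 - X3)%C; [ring| rewrite hf; ring]).
    rewrite HX. ring. }
  assert (hk : (RtoC beta * (RtoC P * X1) = - w * RtoC (c * U1 + beta))%C).
  { replace (RtoC P * X1)%C with (lam * RtoC U1 - w)%C by (rewrite <- e1; ring).
    transitivity ((lam * RtoC beta) * RtoC U1 - w * RtoC beta)%C. ring.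
    rewrite hl. rewrite RtoC_plus, RtoC_mult. ring. }
  assert (m := f_equal Cmod hk).
  rewrite !Cmod_mult, Cmod_opp, !Cmod_RtoC_pos in m; try lra.
  2: { assert (0 <= c * U1) by (apply Rmult_le_pos; lra). lra. }
  assert (0 <= Cmod w) by apply Cmod_ge_0.
  assert (0 <= Cmod X1) by apply Cmod_ge_0.
  assert (0 <= c * U1) by (apply Rmult_le_pos; lra).
  apply Rmult_le_reg_l with beta; auto. nra.
Qed.

Lemma Ceq_dec (z : C) (zz : C) : zz = 0 -> {z = zz} + {z <> zz}.
Proof.
  intros ->. destruct (Req_EM_T (Cmod z) 0) as [e|e].
  - left; apply Cmod_eq_0; exact e.
  - right; intro h; apply e; rewrite h; apply Cmod_0.
Qed.

Lemma Cmult_integral (z w : C) : (z * w = 0)%C -> z = 0 \/ w = 0.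
Proof.
  intro h. destruct (Ceq_dec z 0 eq_refl) as [e|e]; [left; exact e|right].
  transitivity (/ z * (z * w))%C. field. exact e. rewrite h. ring.
Qed.

Lemma Cconj0 : Cconj 0 = 0.
Proof. apply injective_projections; simpl; ring. Qed.

Lemma Cpow0 n : (0 ^ S n)%C = 0.
Proof. simpl. ring. Qed.

Definition caseAB (f : C) (s : R) : Prop :=
  (f = 0 /\ 0 < s <= 36/25) \/ (s = 1 /\ Cmod f < 1).

Lemma single (xk f : C) (n : nat) (s : R) :
  s = Cmod xk ^ 2 -> f = (xk ^ S n)%C -> caseAB f s -> False.
Proof.
  intros hs hf [[h0 h1]|[h0 h1]].
  - subst. destruct (Ceq_dec xk 0 eq_refl) as [e|e].
    + subst. rewrite Cmod_0 in h1. lra.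
    + apply (Cpow_nz xk (S n)) in e. auto.
  - subst. rewrite Cmod_pow in h1.
    assert (Cmod xk = 1) by (assert (0 <= Cmod xk) by apply Cmod_ge_0; nra).
    rewrite H, pow1 in h1. lra.
Qed.

Lemma pow_Sn_le_sq u n : 0 <= u <= 1 -> (1 <= n)%nat -> u ^ S n <= u ^ 2.
Proof. intros; apply pow_le_decr; auto; lia. Qed.

Lemma pow_n_le u n : 0 <= u <= 1 -> (1 <= n)%nat -> u ^ n <= u.
Proof. intros. rewrite <- (pow_1 u) at 2. apply pow_le_decr; auto. Qed.

Lemma core (p1 q1 r1 : nat) (a M : R) (x1 x2 x3 lam : C) :
  (1 <= p1)%nat -> (1 <= q1)%nat -> (1 <= r1)%nat ->
  INR (S p1) <= M -> INR (S q1) <= M -> INR (S r1) <= M -> 12 * M < a ->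
  INR (S q1) * INR (S r1) + INR (S p1) * INR (S r1) + INR (S p1) * INR (S q1)
     <= INR (S p1) * INR (S q1) * INR (S r1) ->
  (S q1 * S r1 + S p1 * S r1 + S p1 * S q1 <= S p1 * S q1 * S r1)%nat ->
  (RtoC (INR (S p1)) * x1 ^ p1 + RtoC a * x2 * x3 = lam * Cconj x1)%C ->
  (RtoC (INR (S q1)) * x2 ^ q1 + RtoC a * x1 * x3 = lam * Cconj x2)%C ->
  (RtoC (INR (S r1)) * x3 ^ r1 + RtoC a * x1 * x2 = lam * Cconj x3)%C ->
  caseAB (x1 ^ S p1 + x2 ^ S q1 + x3 ^ S r1 + RtoC a * x1 * x2 * x3)%C
         (Cmod x1 ^ 2 + Cmod x2 ^ 2 + Cmod x3 ^ 2) -> False.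
Proof.
  intros hp hq hr hPM hQM hRM ha hcR hcN E1 E2 E3 hAB.
  assert (hP : 0 < INR (S p1)) by apply lt_0_INR, Nat.lt_0_succ.
  assert (hQ : 0 < INR (S q1)) by apply lt_0_INR, Nat.lt_0_succ.
  assert (hR : 0 < INR (S r1)) by apply lt_0_INR, Nat.lt_0_succ.
  assert (hM2 : 2 <= M).
  { assert (h2 : INR 2 <= INR (S p1)) by (apply le_INR; lia). replace (INR 2) with 2 in h2 by (simpl; ring). lra. }
  assert (ha0 : 0 < a) by lra.
  assert (hRa : RtoC a <> 0) by (intro e; apply RtoC_inj in e; lra).
  destruct p1 as [|p1]; [lia|]. destruct q1 as [|q1]; [lia|]. destruct r1 as [|r1]; [lia|].
  destruct (Ceq_dec x1 0 eq_refl) as [z1|z1].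
  { subst x1. rewrite Cpow0, Cconj0 in E1.
    assert (e : (RtoC a * (x2 * x3) = 0)%C) by (transitivity (lam * 0)%C; [rewrite <- E1; ring | ring]).
    apply Cmult_integral in e. destruct e as [e|e]; [tauto|].
    apply Cmult_integral in e. destruct e as [e|e]; subst.
    - refine (single x3 _ (S r1) _ _ _ hAB); [rewrite Cmod_0; ring | simpl; ring].
    - refine (single x2 _ (S q1) _ _ _ hAB); [rewrite Cmod_0; ring | simpl; ring]. }
  destruct (Ceq_dec x2 0 eq_refl) as [z2|z2].
  { subst x2. rewrite Cpow0, Cconj0 in E2.
    assert (e : (RtoC a * (x1 * x3) = 0)%C) by (transitivity (lam * 0)%C; [rewrite <- E2; ring | ring]).
    apply Cmult_integral in e. destruct e as [e|e]; [tauto|].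
    apply Cmult_integral in e. destruct e as [e|e]; [tauto|]. subst.
    refine (single x1 _ (S p1) _ _ _ hAB); [rewrite Cmod_0; ring | simpl; ring]. }
  destruct (Ceq_dec x3 0 eq_refl) as [z3|z3].
  { subst x3. rewrite Cpow0, Cconj0 in E3.
    assert (e : (RtoC a * (x1 * x2) = 0)%C) by (transitivity (lam * 0)%C; [rewrite <- E3; ring | ring]).
    apply Cmult_integral in e. destruct e as [e|e]; [tauto|].
    apply Cmult_integral in e. tauto. }
  apply Cmod_gt_0 in z1. apply Cmod_gt_0 in z2. apply Cmod_gt_0 in z3.
  set (P := INR (S (S p1))) in *. set (Q := INR (S (S q1))) in *. set (R := INR (S (S r1))) in *.
  set (w := (RtoC a * x1 * x2 * x3)%C) in *.
  assert (hw : Cmod w = a * Cmod x1 * Cmod x2 * Cmod x3).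
  { unfold w. rewrite !Cmod_mult, Cmod_RtoC_pos by lra. ring. }
  assert (G1 := F3 P a x1 x2 x3 lam w (S p1) eq_refl E1).
  assert (G2 := F3 Q a x2 x1 x3 lam w (S q1) ltac:(unfold w; ring) E2).
  assert (G3 := F3 R a x3 x1 x2 lam w (S r1) ltac:(unfold w; ring) E3).
  assert (K1 := c1 P a x1 x2 x3 lam (S p1) ltac:(lra) ltac:(lra) E1).
  assert (K2 := c1 Q a x2 x1 x3 lam (S q1) ltac:(lra) ltac:(lra) E2).
  assert (K3 := c1 R a x3 x1 x2 lam (S r1) ltac:(lra) ltac:(lra) E3).
  set (u1 := Cmod x1) in *. set (u2 := Cmod x2) in *. set (u3 := Cmod x3) in *.
  assert (hX1 : Cmod (x1 ^ S (S p1)) = u1 ^ S (S p1)) by apply Cmod_pow.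
  assert (hX2 : Cmod (x2 ^ S (S q1)) = u2 ^ S (S q1)) by apply Cmod_pow.
  assert (hX3 : Cmod (x3 ^ S (S r1)) = u3 ^ S (S r1)) by apply Cmod_pow.
  destruct hAB as [[hf [hs0 hs1]] | [hs hf]].
  -
    assert (A1 := algA P Q R (u1^2) (u2^2) (u3^2) _ _ _ w lam hP hQ hR
      ltac:(apply pow_lt; lra) ltac:(apply pow_lt; lra) ltac:(apply pow_lt; lra) hcR G1 G2 G3 hf).
    assert (A2 := algA Q P R (u2^2) (u1^2) (u3^2) _ _ _ w lam hQ hP hR
      ltac:(apply pow_lt; lra) ltac:(apply pow_lt; lra) ltac:(apply pow_lt; lra) ltac:(nra) G2 G1 G3
      ltac:(rewrite <- hf; ring)).
    assert (A3 := algA R P Q (u3^2) (u1^2) (u2^2) _ _ _ w lam hR hP hQ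
      ltac:(apply pow_lt; lra) ltac:(apply pow_lt; lra) ltac:(apply pow_lt; lra) ltac:(nra) G3 G1 G2
      ltac:(rewrite <- hf; ring)).
    rewrite hw, hX1 in A1. rewrite hw, hX2 in A2. rewrite hw, hX3 in A3.
    set (T := u1 * u2 * u3).
    assert (hT : a * u1 * u2 * u3 = a * T) by (unfold T; ring).
    rewrite hT in A1, A2, A3.
    assert (hM : 0 < M) by lra.
    set (L := a / M).
    assert (hL : 1 < L) by (unfold L; apply Rmult_lt_reg_r with M; auto; field_simplify; lra).
    assert (hLT : L * T * M = a * T) by (unfold L; field; lra).
    assert (0 <= T) by (unfold T; repeat apply Rmult_le_pos; lra).
    assert (0 <= u1 ^ S (S p1)) by (apply pow_le; lra).
    assert (0 <= u2 ^ S (S q1)) by (apply pow_le; lra).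
    assert (0 <= u3 ^ S (S r1)) by (apply pow_le; lra).
    assert (B1 : L * T <= u1 ^ S (S p1)) by (apply Rmult_le_reg_r with M; auto; nra).
    assert (B2 : L * T <= u2 ^ S (S q1)) by (apply Rmult_le_reg_r with M; auto; nra).
    assert (B3 : L * T <= u3 ^ S (S r1)) by (apply Rmult_le_reg_r with M; auto; nra).
    assert (HH1 := powA u1 u2 u3 L (S (S p1)) (S (S q1)) (S (S r1)) z1 z2 z3 hL ltac:(lia) ltac:(lia) ltac:(lia) hcN B1 B2 B3).
    assert (HH2 := T_small u1 u2 u3 ltac:(lra) ltac:(lra) ltac:(lra) hs1).
    unfold T in *. lra.
  -
    assert (b1 : u1 <= 1) by nra. assert (b2 : u2 <= 1) by nra. assert (b3 : u3 <= 1) by nra.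
    assert (d1 := pow_Sn_le_sq u1 (S p1) ltac:(lra) ltac:(lia)).
    assert (d2 := pow_Sn_le_sq u2 (S q1) ltac:(lra) ltac:(lia)).
    assert (d3 := pow_Sn_le_sq u3 (S r1) ltac:(lra) ltac:(lia)).
    assert (k1 := pow_n_le u1 (S p1) ltac:(lra) ltac:(lia)).
    assert (k2 := pow_n_le u2 (S q1) ltac:(lra) ltac:(lia)).
    assert (k3 := pow_n_le u3 (S r1) ltac:(lra) ltac:(lia)).
    assert (hwle : Cmod w < 2).
    { assert (ew : w = ((x1 ^ S (S p1) + x2 ^ S (S q1) + x3 ^ S (S r1) + w)
          - x1 ^ S (S p1) - x2 ^ S (S q1) - x3 ^ S (S r1))%C) by ring.
      rewrite ew.
      assert (t1 := Cmod_sub_le ((x1 ^ S (S p1) + x2 ^ S (S q1) + x3 ^ S (S r1) + w)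
          - x1 ^ S (S p1) - x2 ^ S (S q1)) (x3 ^ S (S r1))).
      assert (t2 := Cmod_sub_le ((x1 ^ S (S p1) + x2 ^ S (S q1) + x3 ^ S (S r1) + w)
          - x1 ^ S (S p1)) (x2 ^ S (S q1))).
      assert (t3 := Cmod_sub_le (x1 ^ S (S p1) + x2 ^ S (S q1) + x3 ^ S (S r1) + w) (x1 ^ S (S p1))).
      lra. }
    assert (elam : lam = (RtoC P * x1 ^ S (S p1) + w + (RtoC Q * x2 ^ S (S q1) + w)
                    + (RtoC R * x3 ^ S (S r1) + w))%C).
    { rewrite G1, G2, G3.
      transitivity (lam * RtoC (u1 ^ 2 + u2 ^ 2 + u3 ^ 2))%C.
      rewrite hs. ring. rewrite !RtoC_plus. ring. }
    assert (hlam : Cmod lam <= M + 6).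
    { rewrite elam.
      assert (t1 := Cmod_triangle (RtoC P * x1 ^ S (S p1) + w + (RtoC Q * x2 ^ S (S q1) + w))
                     (RtoC R * x3 ^ S (S r1) + w)).
      assert (t2 := Cmod_triangle (RtoC P * x1 ^ S (S p1) + w) (RtoC Q * x2 ^ S (S q1) + w)).
      assert (t3 := Cmod_triangle (RtoC P * x1 ^ S (S p1)) w).
      assert (t4 := Cmod_triangle (RtoC Q * x2 ^ S (S q1)) w).
      assert (t5 := Cmod_triangle (RtoC R * x3 ^ S (S r1)) w).
      rewrite !Cmod_mult, !Cmod_RtoC_pos in t3, t4, t5 by lra.
      rewrite hX1 in t3. rewrite hX2 in t4. rewrite hX3 in t5.
      assert (0 <= u1 ^ S (S p1)) by (apply pow_le; lra).
      assert (0 <= u2 ^ S (S q1)) by (apply pow_le; lra).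
      assert (0 <= u3 ^ S (S r1)) by (apply pow_le; lra).
      assert (P * u1 ^ S (S p1) <= M * u1 ^ 2) by (apply Rmult_le_compat; lra).
      assert (Q * u2 ^ S (S q1) <= M * u2 ^ 2) by (apply Rmult_le_compat; lra).
      assert (R * u3 ^ S (S r1) <= M * u3 ^ 2) by (apply Rmult_le_compat; lra).
      nra. }
    assert (0 <= Cmod lam) by apply Cmod_ge_0.
    assert (P * u1 ^ S p1 <= M * u1) by (apply Rmult_le_compat; try lra; apply pow_le; lra).
    assert (Q * u2 ^ S q1 <= M * u2) by (apply Rmult_le_compat; try lra; apply pow_le; lra).
    assert (R * u3 ^ S r1 <= M * u3) by (apply Rmult_le_compat; try lra; apply pow_le; lra).
    assert (Cmod lam * u1 <= (M + 6) * u1) by (apply Rmult_le_compat_r; lra).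
    assert (Cmod lam * u2 <= (M + 6) * u2) by (apply Rmult_le_compat_r; lra).
    assert (Cmod lam * u3 <= (M + 6) * u3) by (apply Rmult_le_compat_r; lra).
    apply (realB u1 u2 u3 M a z1 z2 z3 hs hM2 ha); lra.
Qed.

Lemma span (g1 g2 g3 h1 h2 h3 : C) :
  (forall lam, ~ (g1 = lam * h1 /\ g2 = lam * h2 /\ g3 = lam * h3)%C) ->
  (h1 <> 0 \/ h2 <> 0 \/ h3 <> 0) ->
  forall w1 w2 w3 : C, exists v1 v2 v3 : C,
    (g1 * v1 + g2 * v2 + g3 * v3 = 0)%C /\
    Re ((w1 - v1) * h1 + (w2 - v2) * h2 + (w3 - v3) * h3)%C = 0.
Proof.
  intros NP NZ w1 w2 w3.
  assert (V0 : exists a1 a2 a3 : C, (g1 * a1 + g2 * a2 + g3 * a3 = 0)%C /\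
                 (h1 * a1 + h2 * a2 + h3 * a3 <> 0)%C).
  { destruct (Ceq_dec (g1 * h2 - g2 * h1)%C 0 eq_refl) as [m12|m12].
    2: { exists g2, (- g1)%C, 0. split. ring. intro e; apply m12.
         transitivity (- (h1 * g2 + h2 * - g1 + h3 * 0))%C. ring. rewrite e. ring. }
    destruct (Ceq_dec (g1 * h3 - g3 * h1)%C 0 eq_refl) as [m13|m13].
    2: { exists g3, 0, (- g1)%C. split. ring. intro e; apply m13.
         transitivity (- (h1 * g3 + h2 * 0 + h3 * - g1))%C. ring. rewrite e. ring. }
    destruct (Ceq_dec (g2 * h3 - g3 * h2)%C 0 eq_refl) as [m23|m23].
    2: { exists 0, g3, (- g2)%C. split. ring. intro e; apply m23.
         transitivity (- (h1 * 0 + h2 * g3 + h3 * - g2))%C. ring. rewrite e. ring. }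
    exfalso.
    assert (r12 : (g1 * h2 = g2 * h1)%C) by (transitivity (g1 * h2 - g2 * h1 + g2 * h1)%C; [ring| rewrite m12; ring]).
    assert (r13 : (g1 * h3 = g3 * h1)%C) by (transitivity (g1 * h3 - g3 * h1 + g3 * h1)%C; [ring| rewrite m13; ring]).
    assert (r23 : (g2 * h3 = g3 * h2)%C) by (transitivity (g2 * h3 - g3 * h2 + g3 * h2)%C; [ring| rewrite m23; ring]).
    destruct NZ as [n1|[n2|n3]].
    - apply (NP (g1 / h1)%C). split; [|split].
      + field. exact n1.
      + transitivity (g2 * h1 / h1)%C. field. exact n1. rewrite <- r12. field. exact n1.
      + transitivity (g3 * h1 / h1)%C. field. exact n1. rewrite <- r13. field. exact n1.
    - apply (NP (g2 / h2)%C). split; [|split].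
      + transitivity (g1 * h2 / h2)%C. field. exact n2. rewrite r12. field. exact n2.
      + field. exact n2.
      + transitivity (g3 * h2 / h2)%C. field. exact n2. rewrite <- r23. field. exact n2.
    - apply (NP (g3 / h3)%C). split; [|split].
      + transitivity (g1 * h3 / h3)%C. field. exact n3. rewrite r13. field. exact n3.
      + transitivity (g2 * h3 / h3)%C. field. exact n3. rewrite r23. field. exact n3.
      + field. exact n3. }
  destruct V0 as [a1 [a2 [a3 [Ha Hd]]]].
  exists (RtoC (Re (w1 * h1 + w2 * h2 + w3 * h3)%C) / (h1 * a1 + h2 * a2 + h3 * a3) * a1)%C,
    (RtoC (Re (w1 * h1 + w2 * h2 + w3 * h3)%C) / (h1 * a1 + h2 * a2 + h3 * a3) * a2)%C,
    (RtoC (Re (w1 * h1 + w2 * h2 + w3 * h3)%C) / (h1 * a1 + h2 * a2 + h3 * a3) * a3)%C.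
  remember (Re (w1 * h1 + w2 * h2 + w3 * h3)%C) as c eqn:Hc.
  split.
  - transitivity (RtoC c / (h1 * a1 + h2 * a2 + h3 * a3) * (g1 * a1 + g2 * a2 + g3 * a3))%C. ring.
    rewrite Ha. ring.
  - assert (e : ((w1 - RtoC c / (h1 * a1 + h2 * a2 + h3 * a3) * a1) * h1
       + (w2 - RtoC c / (h1 * a1 + h2 * a2 + h3 * a3) * a2) * h2
       + (w3 - RtoC c / (h1 * a1 + h2 * a2 + h3 * a3) * a3) * h3
       = (w1 * h1 + w2 * h2 + w3 * h3) - RtoC c)%C).
    { field. exact Hd. }
    rewrite e, Hc. generalize (w1 * h1 + w2 * h2 + w3 * h3)%C. intros [s1 s2]. simpl. ring.
Qed.

Notation CV := (AbsRing_NormedModule C_AbsRing).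

Lemma tr (f:C->C) x l : @is_derive C_AbsRing CV f x l -> @is_derive C_AbsRing C_NormedModule f x l.
Proof. intro H. unfold is_derive, filterdiff in *. destruct H as [H1 H2]; split.
 apply is_linear_scal_l.
 intros y Hy; specialize (H2 y Hy); exact H2.
Qed.

Lemma is_derive_eqC (f : C -> C) x l l' :
  @is_derive C_AbsRing CV f x l -> l = l' -> @is_derive C_AbsRing CV f x l'.
Proof. intros H ->; exact H. Qed.

Lemma is_derive_Cpow n x :
  @is_derive C_AbsRing CV (fun z : C => Cpow z (S n)) x (RtoC (INR (S n)) * Cpow x n)%C.
Proof.
  induction n as [|n IH].
  - apply (@is_derive_ext C_AbsRing CV) with (f := fun t : C => t).
    { intro t; symmetry; apply Cpow_1_r. }
    eapply is_derive_eqC. apply (is_derive_id (K:=C_AbsRing)).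
    change (RtoC 1 = RtoC (INR 1) * 1)%C. simpl. apply injective_projections; simpl; ring.
  - apply (@is_derive_ext C_AbsRing CV) with (f := fun t : C => mult t (Cpow t (S n))).
    { intro t; reflexivity. }
    eapply is_derive_eqC.
    apply (is_derive_mult (K:=C_AbsRing)). apply (is_derive_id (K:=C_AbsRing)). exact IH.
    intros; apply Cmult_comm.
    change (Cplus (Cmult 1 (Cpow x (S n))) (Cmult x (RtoC (INR (S n)) * Cpow x n)) = RtoC (INR (S (S n))) * Cpow x (S n))%C.
    rewrite (S_INR (S n)). rewrite RtoC_plus. simpl Cpow. ring.
Qed.

Lemma is_derive_poly n (A B x : C) :
  @is_derive C_AbsRing C_NormedModule (fun z : C => Cpow z (S n) + A * z + B)%C x
     (RtoC (INR (S n)) * Cpow x n + A)%C.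
Proof.
  apply tr.
  apply (@is_derive_ext C_AbsRing CV) with (f := fun t : C => plus (plus (Cpow t (S n)) (mult A t)) B).
  { intro t; reflexivity. }
  eapply is_derive_eqC.
  apply (@is_derive_plus C_AbsRing CV). apply (@is_derive_plus C_AbsRing CV).
  apply is_derive_Cpow.
  apply (is_derive_mult (K:=C_AbsRing)). apply (@is_derive_const C_AbsRing CV). apply (is_derive_id (K:=C_AbsRing)).
  intros; apply Cmult_comm.
  apply (@is_derive_const C_AbsRing CV).
  change (Cplus (Cplus (RtoC (INR (S n)) * Cpow x n) (Cplus (Cmult 0 x) (Cmult A 1))) 0 = RtoC (INR (S n)) * Cpow x n + A)%C.
  ring.
Qed.

Lemma transverse_of (p1 q1 r1 : nat) (a M : R) (s : C) (rho : R) :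
  (1 <= p1)%nat -> (1 <= q1)%nat -> (1 <= r1)%nat ->
  INR (S p1) <= M -> INR (S q1) <= M -> INR (S r1) <= M -> 12 * M < a ->
  INR (S q1) * INR (S r1) + INR (S p1) * INR (S r1) + INR (S p1) * INR (S q1)
     <= INR (S p1) * INR (S q1) * INR (S r1) ->
  (S q1 * S r1 + S p1 * S r1 + S p1 * S q1 <= S p1 * S q1 * S r1)%nat ->
  (forall x1 x2 x3 : C, sqrt (Cmod x1 ^ 2 + Cmod x2 ^ 2 + Cmod x3 ^ 2) = rho ->
      fpqr (S p1) (S q1) (S r1) a (x1, x2, x3) = s ->
      caseAB (fpqr (S p1) (S q1) (S r1) a (x1, x2, x3)) (Cmod x1 ^ 2 + Cmod x2 ^ 2 + Cmod x3 ^ 2)) ->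
  transverse (fpqr (S p1) (S q1) (S r1) a) s rho.
Proof.
  intros hp hq hr hPM hQM hRM ha hcR hcN H [[x1 x2] x3] hsph hf.
  specialize (H x1 x2 x3 hsph hf).
  set (g1 := (RtoC (INR (S p1)) * x1 ^ p1 + RtoC a * x2 * x3)%C).
  set (g2 := (RtoC (INR (S q1)) * x2 ^ q1 + RtoC a * x1 * x3)%C).
  set (g3 := (RtoC (INR (S r1)) * x3 ^ r1 + RtoC a * x1 * x2)%C).
  assert (NP : forall lam, ~ (g1 = lam * Cconj x1 /\ g2 = lam * Cconj x2 /\ g3 = lam * Cconj x3)%C).
  { intros lam [e1 [e2 e3]].
    exact (core p1 q1 r1 a M x1 x2 x3 lam hp hq hr hPM hQM hRM ha hcR hcN e1 e2 e3 H). }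
  exists (g1, g2, g3). split; [|split].
  - split; [|split].
    + eapply (@is_derive_ext C_AbsRing C_NormedModule).
      2: apply (is_derive_poly p1 (RtoC a * x2 * x3)%C (x2 ^ S q1 + x3 ^ S r1)%C x1).
      intro t. unfold fpqr. match goal with |- ?A = ?B => change (@eq C A B) end. ring.
    + eapply (@is_derive_ext C_AbsRing C_NormedModule).
      2: apply (is_derive_poly q1 (RtoC a * x1 * x3)%C (x1 ^ S p1 + x3 ^ S r1)%C x2).
      intro t. unfold fpqr. match goal with |- ?A = ?B => change (@eq C A B) end. ring.
    + eapply (@is_derive_ext C_AbsRing C_NormedModule).
      2: apply (is_derive_poly r1 (RtoC a * x1 * x2)%C (x1 ^ S p1 + x2 ^ S q1)%C x3).
      intro t. unfold fpqr. match goal with |- ?A = ?B => change (@eq C A B) end. ring.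
  - intro e. apply (NP 0%C).
    assert (e1 : g1 = 0) by exact (f_equal (fun v : C3 => fst (fst v)) e).
    assert (e2 : g2 = 0) by exact (f_equal (fun v : C3 => snd (fst v)) e).
    assert (e3 : g3 = 0) by exact (f_equal (fun v : C3 => snd v) e).
    rewrite e1, e2, e3. repeat split; ring.
  - intros [[w1 w2] w3].
    assert (NZ : Cconj x1 <> 0 \/ Cconj x2 <> 0 \/ Cconj x3 <> 0).
    { destruct (Ceq_dec x1 0 eq_refl) as [z1|z1].
      2: { left; intro e; apply z1; apply Cmod_eq_0; rewrite <- Cmod_conj, e; apply Cmod_0. }
      destruct (Ceq_dec x2 0 eq_refl) as [z2|z2].
      2: { right; left; intro e; apply z2; apply Cmod_eq_0; rewrite <- Cmod_conj, e; apply Cmod_0. }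
      destruct (Ceq_dec x3 0 eq_refl) as [z3|z3].
      2: { right; right; intro e; apply z3; apply Cmod_eq_0; rewrite <- Cmod_conj, e; apply Cmod_0. }
      exfalso. subst. rewrite Cmod_0 in H. destruct H as [[_ [h _]]|[h _]]; simpl in h; lra. }
    destruct (span g1 g2 g3 (Cconj x1) (Cconj x2) (Cconj x3) NP NZ w1 w2 w3) as [v1 [v2 [v3 [hk ht]]]].
    exists ((w1 - v1)%C, (w2 - v2)%C, (w3 - v3)%C), (v1, v2, v3). split; [|split].
    + simpl. f_equal; [f_equal|]; ring.
    + exact ht.
    + exact hk.
Qed.

Lemma sqrt_eq_sq (x rho : R) : 0 <= x -> sqrt x = rho -> x = rho ^ 2.
Proof. intros h e. rewrite <- e. simpl. rewrite Rmult_1_r, sqrt_sqrt; auto. Qed.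

Lemma polar (t : C) : 0 < Cmod t -> exists theta : R,
  (RtoC (Cmod t) * (cos theta, sin theta))%C = t.
Proof.
  intro ht. destruct t as [t1 t2].
  set (m := Cmod (t1, t2)) in *.
  assert (hm : m ^ 2 = t1 ^ 2 + t2 ^ 2) by (unfold m; apply Cmod2_alt).
  set (c := t1 / m). set (sn := t2 / m).
  assert (hcs : c ^ 2 + sn ^ 2 = 1) by (unfold c, sn; field_simplify; [rewrite <- hm; field|]; lra).
  assert (hc : -1 <= c <= 1) by nra.
  assert (hsq : sqrt (1 - c²) = Rabs sn).
  { rewrite <- sqrt_Rsqr_abs. f_equal. unfold Rsqr. nra. }
  destruct (Rle_dec 0 t2) as [h2|h2].
  - exists (acos c). rewrite cos_acos, sin_acos, hsq by exact hc.
    rewrite Rabs_pos_eq by (unfold sn; apply Rdiv_le_0_compat; lra).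
    unfold c, sn. apply injective_projections; simpl; field; lra.
  - exists (- acos c). rewrite cos_neg, sin_neg, cos_acos, sin_acos, hsq by exact hc.
    rewrite Rabs_left by (assert (0 < / m) by (apply Rinv_0_lt_compat; lra); unfold sn, Rdiv; nra). 
    unfold c, sn. apply injective_projections; simpl; field; lra.
Qed.

Theorem lemma1p8 (p q r : nat) (a : R) (t : C) :
  (0 < p)%nat -> (0 < q)%nat -> (0 < r)%nat ->
  / INR p + / INR q + / INR r <= 1 ->
  0 < a ->
  a > 12 * INR (Nat.max p (Nat.max q r)) ->
  0 < Cmod t < 1 ->
  milnor_fiber (fpqr p q r a) (Va p q r a 1 t).
Proof.
  intros hp hq hr hsum ha hM ht.
  set (M := INR (Nat.max p (Nat.max q r))) in *.
  assert (hPM : INR p <= M) by (apply le_INR; lia).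
  assert (hQM : INR q <= M) by (apply le_INR; lia).
  assert (hRM : INR r <= M) by (apply le_INR; lia).
  assert (hP : 0 < INR p) by (apply lt_0_INR; lia).
  assert (hQ : 0 < INR q) by (apply lt_0_INR; lia).
  assert (hR : 0 < INR r) by (apply lt_0_INR; lia).
  assert (hcR : INR q * INR r + INR p * INR r + INR p * INR q <= INR p * INR q * INR r).
  { replace (INR q * INR r + INR p * INR r + INR p * INR q)
      with ((/ INR p + / INR q + / INR r) * (INR p * INR q * INR r)) by (field; lra).
    rewrite <- (Rmult_1_l (INR p * INR q * INR r)) at 2.
    apply Rmult_le_compat_r; auto. repeat apply Rmult_le_pos; lra. }
  assert (hcN : (q * r + p * r + p * q <= p * q * r)%nat).
  { apply INR_le. rewrite !plus_INR, !mult_INR. exact hcR. }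
  assert (hp1 : (2 <= p)%nat).
  { destruct (Nat.eq_dec p 1) as [e|e]; [|lia]. subst. simpl in hsum.
    assert (0 < / INR q) by (apply Rinv_0_lt_compat; lra).
    assert (0 < / INR r) by (apply Rinv_0_lt_compat; lra). lra. }
  assert (hq1 : (2 <= q)%nat).
  { destruct (Nat.eq_dec q 1) as [e|e]; [|lia]. subst. simpl in hsum.
    assert (0 < / INR p) by (apply Rinv_0_lt_compat; lra).
    assert (0 < / INR r) by (apply Rinv_0_lt_compat; lra). lra. }
  assert (hr1 : (2 <= r)%nat).
  { destruct (Nat.eq_dec r 1) as [e|e]; [|lia]. subst. simpl in hsum.
    assert (0 < / INR q) by (apply Rinv_0_lt_compat; lra).
    assert (0 < / INR p) by (apply Rinv_0_lt_compat; lra). lra. }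
  clearbody M.
  destruct p as [|p1]; [lia|]. destruct q as [|q1]; [lia|]. destruct r as [|r1]; [lia|].
  assert (TR : forall s rho, (forall x1 x2 x3 : C, sqrt (Cmod x1 ^ 2 + Cmod x2 ^ 2 + Cmod x3 ^ 2) = rho ->
      fpqr (S p1) (S q1) (S r1) a (x1, x2, x3) = s ->
      caseAB (fpqr (S p1) (S q1) (S r1) a (x1, x2, x3)) (Cmod x1 ^ 2 + Cmod x2 ^ 2 + Cmod x3 ^ 2)) ->
      transverse (fpqr (S p1) (S q1) (S r1) a) s rho).
  { intros s rho. apply (transverse_of p1 q1 r1 a M s rho); auto; lia. }
  destruct (polar t ltac:(lra)) as [theta htheta].
  exists 1, (Cmod t), theta. split; [lra|split; [|split; [lra|split]]].
  -
    assert (E : 0 < 6/5 /\ forall rho, 0 < rho -> rho <= 6/5 -> transverse (fpqr (S p1) (S q1) (S r1) a) (RtoC 0) rho).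
    { split; [lra|]. intros rho h0 h1. apply TR. intros x1 x2 x3 hs hf.
      assert (hnn : 0 <= Cmod x1 ^ 2 + Cmod x2 ^ 2 + Cmod x3 ^ 2) by (assert (0 <= Cmod x1 ^ 2) by apply pow2_ge_0;
          assert (0 <= Cmod x2 ^ 2) by apply pow2_ge_0; assert (0 <= Cmod x3 ^ 2) by apply pow2_ge_0; lra).
      assert (hs' := sqrt_eq_sq _ _ hnn hs).
      left. split; [exact hf|]. rewrite hs'. split; nra. }
    unfold milnor_radius.
    destruct (Lub_Rbar_correct (fun eps => 0 < eps /\
       forall rho, 0 < rho -> rho <= eps -> transverse (fpqr (S p1) (S q1) (S r1) a) (RtoC 0) rho)) as [hub _].
    specialize (hub (6/5) E).
    destruct (Lub_Rbar _) as [l| |]; simpl in *; lra.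
  - intros s hs. apply TR. intros x1 x2 x3 hsp hf.
    assert (hnn : 0 <= Cmod x1 ^ 2 + Cmod x2 ^ 2 + Cmod x3 ^ 2) by (assert (0 <= Cmod x1 ^ 2) by apply pow2_ge_0;
          assert (0 <= Cmod x2 ^ 2) by apply pow2_ge_0; assert (0 <= Cmod x3 ^ 2) by apply pow2_ge_0; lra).
      assert (hs' := sqrt_eq_sq _ _ hnn hsp).
    right. split. rewrite hs'; ring. rewrite hf. lra.
  - intro x. unfold Va. rewrite htheta. tauto.
Qed.
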